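(* For any context $\Gamma$ and formula $A$, there is at most one focused derivation of the sequent $\Gamma\vdash A$.
   Context: Formulas are built from atoms ($p,q,\dots$) by a binary product: every formula is an atom or $A\bullet B$. A context is a finite (possibly empty) list of formulas; commas denote concatenation. A derivation is a finite rooted tree whose nodes are labelled by rule instances and whose edges are labelled by sequents $\Gamma\vdash A$. A context is irreducible if its leftmost formula is not a product (it is empty or begins with an atom). A focused derivation is a derivation with no undischarged premises using only the rules: ($\bullet L$): from $A,B,\Delta\vdash C$ infer $A\bullet B,\Delta\vdash C$; ($\bullet R^{foc}$): from $\Gamma\vdash A$ and $\Delta\vdash B$ infer $\Gamma,\Delta\vdash A\bullet B$, where $\Gamma$ is irreducible; and ($id^{atm}$): $p\vdash p$ for atoms $p$. *)

(* Defs.v *)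
From Stdlib Require Import List.
Import ListNotations.

Inductive fma : Type :=
| atom : nat -> fma
| prod : fma -> fma -> fma.

(* Contexts: finite lists of formulas; comma = list concatenation (++). *)
Definition ctx := list fma.

Definition irreducible (G : ctx) : Prop :=
  match G with
  | [] => True
  | atom _ :: _ => True
  | prod _ _ :: _ => False
  end.

Inductive focused : ctx -> fma -> Type :=
| f_prodL : forall (A B C : fma) (D : ctx),
    focused (A :: B :: D) C -> focused (prod A B :: D) C
| f_prodR : forall (G D : ctx) (A B : fma),
    irreducible G ->
    focused G A -> focused D B -> focused (G ++ D) (prod A B)
| f_id : forall p : nat, focused [atom p] (atom p).

(* Main.v *)
Require Import Defs.
From Stdlib Require Import List Program.Equality.
Import ListNotations.

Fixpoint flatf (A : fma) : list nat :=
  match A with atom p => [p] | prod A B => flatf A ++ flatf B end.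
Definition flatc (G : ctx) : list nat := flat_map flatf G.

Lemma flatf_ne A : flatf A <> [].
Proof. induction A; simpl; [discriminate|]. destruct (flatf A1); [congruence|discriminate]. Qed.

Lemma flat_inv G A : focused G A -> flatc G = flatf A.
Proof.
  induction 1; unfold flatc in *; simpl in *; auto.
  - rewrite <- IHfocused. simpl. rewrite app_assoc. reflexivity.
  - rewrite flat_map_app, IHfocused1, IHfocused2. reflexivity.
Qed.

Lemma flatc_nil G : flatc G = [] -> G = [].
Proof.
  destruct G as [|a G]; auto. unfold flatc; simpl. intro H.
  destruct (flatf a) eqn:E; [exfalso; exact (flatf_ne a E)|discriminate].
Qed.

Lemma split_unique G1 D1 G2 D2 : G1 ++ D1 = G2 ++ D2 -> flatc G1 = flatc G2 -> G1 = G2.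
Proof.
  revert G2. induction G1 as [|a G1 IH]; intros [|b G2] H F.
  - reflexivity.
  - symmetry; apply flatc_nil; auto.
  - apply flatc_nil; auto.
  - simpl in H. injection H as -> H. f_equal. apply IH; auto.
    unfold flatc in F; simpl in F. eapply app_inv_head; exact F.
Qed.

Lemma nonempty G A : focused G A -> G <> [].
Proof. induction 1; try discriminate. destruct G; simpl; auto. discriminate. Qed.

Lemma irr_unique G (p q : irreducible G) : p = q.
Proof. destruct G as [|[|] ?]; simpl in *; destruct p; destruct q; reflexivity. Qed.

Theorem lemma1p18 (G : ctx) (A : fma) (d1 d2 : focused G A) : d1 = d2.
Proof.
  revert d2; induction d1; intro d2; dependent destruction d2.
  - f_equal. apply IHd1.
  - exfalso. destruct G as [|g G]; [exact (nonempty _ _ d2_1 eq_refl)|].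
    simpl in x0. injection x0 as -> _. exact i.
  - exfalso. destruct G as [|g G]; [exact (nonempty _ _ d1_1 eq_refl)|].
    simpl in x0. injection x0 as <- _. exact i.
  - assert (EG : G0 = G).
    { apply (split_unique _ _ _ _ x0). rewrite (flat_inv _ _ d2_1), (flat_inv _ _ d1_1). reflexivity. }
    subst G0. apply app_inv_head in x0. subst D0.
    apply JMeq_eq in x. subst d0.
    rewrite (irr_unique _ i i0), (IHd1_1 d2_1), (IHd1_2 d2_2). reflexivity.
  - reflexivity.
Qed.
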